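(* Fix $q\in(1/2,1)$, integers $K\ge1$, $1\le C\le K/2$, and $\lambda\in[0,1]$. Let $\sigma$ be a state-symmetric strategy with $\sigma(1,k)(C)=1$ for every $k\ge K/2$. Then $\phi_\sigma$ has no fixed point $x\in[0,1]$ satisfying both $\lambda x+(1-\lambda)q>1/2$ and $x\le q$.
   Context: A strategy is a map $\sigma:\{-1,1\}\times\{0,\dots,K\}\to\Delta(\{0,\dots,C\})$, where $\sigma(s,k)$ is the distribution of the number of positive stories (out of $C$ shared) shared by an agent with own story $s$ who sees $k$ positive stories among $K$ in their news feed; feasibility requires $\sigma(s,k)$ to be supported in $[\max(0,C+k-K),\min(k,C)]$. $\mathbb{E}[\sigma(s,k)]$ denotes the mean of $\sigma(s,k)$. $\sigma$ is state symmetric if $\sigma(s,k)(z)=\sigma(-s,K-k)(C-z)$ for all $s,k,z$. The inflow accuracy function of $\sigma$ is $\phi_\sigma(x)=\frac{q+\sum_{k=0}^K P_k(x,\lambda)[q\,\mathbb{E}[\sigma(1,k)]+(1-q)\mathbb{E}[\sigma(-1,k)]]}{1+C}$ with $P_k(x,\lambda)=\mathbb{P}[\mathrm{Binom}(K,\lambda x+(1-\lambda)q)=k]$. *)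

(* Defs.v *)
From HB Require Import structures.
From mathcomp Require Import all_boot all_order all_algebra.
From mathcomp Require Import reals.
Set Implicit Arguments. Unset Strict Implicit. Unset Printing Implicit Defensive.
Import Order.TTheory GRing.Theory Num.Theory.
Local Open Scope ring_scope.

(* A (mixed) strategy: sigma s k z is the probability that an agent with own
   story s (true = +1, false = -1) who sees k positive stories among K in the
   feed shares exactly z positive stories (out of C).  Only the values with
   k <= K and z <= C are meaningful. *)
Definition strategy (R : realType) := bool -> nat -> nat -> R.

Definition is_strategy (R : realType) (K C : nat) (sigma : strategy R) : Prop :=
  forall (s : bool) (k : nat), (k <= K)%N ->
    [/\ (forall z, (z <= C)%N -> 0 <= sigma s k z),
        \sum_(z < C.+1) sigma s k z = 1
      & (forall z, (z <= C)%N ->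
           ~~ ((C + k - K <= z)%N && (z <= minn k C)%N) -> sigma s k z = 0)].

Definition state_symmetric (R : realType) (K C : nat) (sigma : strategy R) : Prop :=
  forall (s : bool) (k z : nat), (k <= K)%N -> (z <= C)%N ->
    sigma s k z = sigma (~~ s) (K - k)%N (C - z)%N.

Definition mean_share (R : realType) (C : nat) (sigma : strategy R) (s : bool) (k : nat) : R :=
  \sum_(z < C.+1) (z%:R * sigma s k z).

Definition binom_pmf (R : realType) (K : nat) (p : R) (k : nat) : R :=
  ('C(K, k))%:R * p ^+ k * (1 - p) ^+ (K - k).

Definition Pk (R : realType) (K : nat) (q lambda x : R) (k : nat) : R :=
  binom_pmf K (lambda * x + (1 - lambda) * q) k.

Definition inflow_accuracy (R : realType) (K C : nat) (q lambda : R)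
    (sigma : strategy R) (x : R) : R :=
  (q + \sum_(k < K.+1) Pk K q lambda x k *
         (q * mean_share C sigma true k + (1 - q) * mean_share C sigma false k))
  / (1 + C%:R).

(* Main.v *)
Require Import Defs.
From HB Require Import structures.
From mathcomp Require Import all_boot all_order all_algebra.
From mathcomp Require Import reals.
From mathcomp Require Import ring lra zify.
Import Order.TTheory GRing.Theory Num.Theory.
Local Open Scope ring_scope.

Lemma sum_rev (R : realType) (n : nat) (F : nat -> R) :
  \sum_(k < n.+1) F (n - k)%N = \sum_(k < n.+1) F k.
Proof.
rewrite (reindex_inj rev_ord_inj) /=; apply: eq_bigr => i _.
by rewrite subSS subKn // -ltnS.
Qed.

Lemma binom_sum1 (R : realType) (K : nat) (p : R) :
  \sum_(k < K.+1) binom_pmf K p k = 1.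
Proof.
have := exprDn (1 - p) p K; rewrite subrK expr1n => ->.
apply: eq_bigr => i _; rewrite /binom_pmf -mulr_natl; ring.
Qed.

Lemma binom_rev (R : realType) (K k : nat) (p : R) : (k <= K)%N ->
  binom_pmf K p (K - k) = ('C(K, k))%:R * p ^+ (K - k) * (1 - p) ^+ k.
Proof. by move=> hk; rewrite /binom_pmf bin_sub // subKn. Qed.

Lemma e_nonneg (R : realType) (K k : nat) (p : R) :
  1 / 2 < p -> p <= 1 -> (2 * k < K)%N ->
  0 <= (1 - p) * binom_pmf K p (K - k) - p * binom_pmf K p k.
Proof.
move=> hp hp1 hk; rewrite binom_rev; last by lia.
have [m hm] : exists m, K = (k + k + m.+1)%N by exists (K - 2 * k).-1; lia.
have -> : (K - k = k + m.+1)%N by lia.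
rewrite /binom_pmf.
have -> : (K - k = k + m.+1)%N by lia.
have h1 : 0 <= 1 - p by lra.
have h0 : 0 <= p by lra.
have hpm : (1 - p) ^+ m <= p ^+ m by apply: lerXn2r; rewrite ?nnegrE //; lra.
have -> : (1 - p) * ('C(K, k)%:R * p ^+ (k + m.+1) * (1 - p) ^+ k) -
    p * ('C(K, k)%:R * p ^+ k * (1 - p) ^+ (k + m.+1)) =
    'C(K, k)%:R * (p ^+ k.+1 * (1 - p) ^+ k.+1) * (p ^+ m - (1 - p) ^+ m).
  by rewrite !exprD !exprS; ring.
apply: mulr_ge0; last by lra.
by apply: mulr_ge0; rewrite ?ler0n // mulr_ge0 // exprn_ge0.
Qed.

Lemma e0_pos (R : realType) (K : nat) (p : R) :
  1 / 2 < p -> p < 1 -> (2 <= K)%N ->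
  0 < (1 - p) * binom_pmf K p K - p * binom_pmf K p 0.
Proof.
move=> hp hp1 hK.
have [m ->] : exists m, K = m.+2 by exists (K - 2)%N; lia.
rewrite /binom_pmf bin0 binn subnn subn0 !expr0.
have h1 : 0 < 1 - p by lra.
have h0 : 0 < p by lra.
have hpm : (1 - p) ^+ m.+1 < p ^+ m.+1.
  by rewrite ltrXn2r //; lra.
have -> : (1 - p) * (1%:R * p ^+ m.+2 * 1) - p * (1%:R * 1 * (1 - p) ^+ m.+2) =
   (p * (1 - p)) * (p ^+ m.+1 - (1 - p) ^+ m.+1).
  by rewrite (exprS p (m.+1)) (exprS (1 - p) (m.+1)); ring.
apply: mulr_gt0; first exact: mulr_gt0.
by lra.
Qed.

Lemma mean_ge0 {R : realType} {K C : nat} {sigma : strategy R} (hs : is_strategy K C sigma) s k : (k <= K)%N -> 0 <= mean_share C sigma s k.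
Proof.
move=> hk; have [h0 _ _] := hs s k hk.
by apply: sumr_ge0 => z _; rewrite mulr_ge0 ?ler0n ?h0 // -ltnS.
Qed.

Lemma mean_leC {R : realType} {K C : nat} {sigma : strategy R} (hs : is_strategy K C sigma) s k : (k <= K)%N -> mean_share C sigma s k <= C%:R.
Proof.
move=> hk; have [h0 h1 _] := hs s k hk.
apply: (@le_trans _ _ (\sum_(z < C.+1) C%:R * sigma s k z)); last first.
  by rewrite -mulr_sumr h1 mulr1.
apply: ler_sum => z _.
have hz : (z <= C)%N by rewrite -ltnS.
apply: ler_wpM2r; first exact: h0.
by rewrite ler_nat.
Qed.

Lemma mean0 {R : realType} {K C : nat} {sigma : strategy R} (hs : is_strategy K C sigma) : mean_share C sigma true 0 = 0.
Proof.
have [_ _ h2] := hs true 0%N (leq0n K).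
apply: big1 => [[z hz]] _ /=.
case: z hz => [|z] hz; first by rewrite mul0r.
rewrite h2 ?mulr0 //.
by apply/negP => /andP [_]; rewrite minnC minn0.
Qed.

Lemma meanC {R : realType} {K C : nat} {sigma : strategy R} (hs : is_strategy K C sigma) k : (k <= K)%N -> sigma true k C = 1 -> mean_share C sigma true k = C%:R.
Proof.
move=> hk hC; have [h0 h1 _] := hs true k hk.
move: h1; rewrite /mean_share !big_ord_recr /= hC mulr1 => h1.
have hz : forall z : 'I_C, sigma true k z = 0.
  have h : \sum_(i < C) sigma true k i = 0 by lra.
  move=> z; move/psumr_eq0P: h => h; have hh : forall i : 'I_C, 0 <= sigma true k i.
    by move=> i; apply: h0; apply: ltnW.
  exact: (h (fun i _ => hh i) z isT).
rewrite big1 ?add0r //.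
move=> z _ /=. have := hz z. rewrite /= => ->. by rewrite mulr0.
Qed.

Lemma mean_false {R : realType} {K C : nat} {sigma : strategy R} (hs : is_strategy K C sigma) (hsym : state_symmetric K C sigma) k : (k <= K)%N ->
  mean_share C sigma false k = C%:R - mean_share C sigma true (K - k).
Proof.
move=> hk; have hk' : (K - k <= K)%N by apply: leq_subr.
have [_ h1 _] := hs true (K - k)%N hk'.
rewrite /mean_share.
transitivity (\sum_(z < C.+1) (fun z => z%:R * sigma true (K - k)%N (C - z)%N) z).
  apply: eq_bigr => z _ /=; rewrite hsym //; by rewrite -ltnS.
rewrite -(@sum_rev R C (fun z => z%:R * sigma true (K - k)%N (C - z)%N)) /=.
transitivity (\sum_(z < C.+1) (C%:R * sigma true (K - k)%N z - z%:R * sigma true (K - k)%N z)).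
  apply: eq_bigr => z _ /=.
  have hz : (z <= C)%N by rewrite -ltnS.
  rewrite subKn // natrB //; ring.
by rewrite sumrB -mulr_sumr h1 mulr1.
Qed.

Theorem lemma4 (R : realType) (q lambda : R) (K C : nat) (sigma : strategy R) :
  1 / 2 < q -> q < 1 ->
  (1 <= K)%N -> (1 <= C)%N -> (2 * C <= K)%N ->
  0 <= lambda -> lambda <= 1 ->
  is_strategy K C sigma ->
  state_symmetric K C sigma ->
  (forall k : nat, (k <= K)%N -> (K <= 2 * k)%N -> sigma true k C = 1) ->
  ~ (exists x : R,
       [/\ 0 <= x, x <= 1,
           inflow_accuracy K C q lambda sigma x = x,
           1 / 2 < lambda * x + (1 - lambda) * q
         & x <= q]).
Proof.
move=> hq hq1 hK hC hCK hl0 hl1 hs hsym hsC [x [hx0 hx1 hfix hp hxq]].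
move: hfix; rewrite /inflow_accuracy.
set p := lambda * x + (1 - lambda) * q.
move: hp; rewrite -/p => hp hfix.
have hpq : p <= q.
  have e : q - p = lambda * (q - x) by rewrite /p; ring.
  have : 0 <= lambda * (q - x) by apply: mulr_ge0; lra.
  lra.
have hxp : x <= p.
  have e : p - x = (1 - lambda) * (q - x) by rewrite /p; ring.
  have : 0 <= (1 - lambda) * (q - x) by apply: mulr_ge0; lra.
  lra.
have hp1 : p < 1 by lra.
set P := fun k => binom_pmf K p k.
have hPk : forall k, Pk K q lambda x k = P k by [].
set w := fun k => C%:R - mean_share C sigma true k.
have hw0 : forall k, (k <= K)%N -> 0 <= w k.
  by move=> k hk; rewrite /w subr_ge0; exact: (mean_leC hs).
have hwC : forall k, (k <= K)%N -> w k <= C%:R.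
  by move=> k hk; rewrite /w lerBlDr lerDl; exact: (mean_ge0 hs).
have hwz : forall k, (k <= K)%N -> (K <= 2 * k)%N -> w k = 0.
  by move=> k hk hk2; rewrite /w (meanC hs) ?subrr // hsC.
have hw00 : w 0%N = C%:R by rewrite /w (mean0 hs) subr0.
have hP0 : forall k, 0 <= P k.
  move=> k; rewrite /P /binom_pmf; apply: mulr_ge0; last by apply: exprn_ge0; lra.
  by apply: mulr_ge0; [exact: ler0n | apply: exprn_ge0; lra].
have SP : \sum_(k < K.+1) P k = 1 by exact: binom_sum1.
move: hfix; set A := \sum_(k < K.+1) _ => hfix.
set X1 := \sum_(k < K.+1) w k * P k.
set X2 := \sum_(k < K.+1) w (K - k)%N * P k.
have HX2 : \sum_(k < K.+1) w k * P (K - k)%N = X2.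
  rewrite -(@sum_rev R K (fun k => w k * P (K - k)%N)) /X2.
  apply: eq_bigr => k _ /=; have hk : (k <= K)%N by rewrite -ltnS.
  by rewrite subKn.
have L1 : A = q * C%:R * (\sum_(k < K.+1) P k) - q * X1 + (1 - q) * X2.
  have -> : A = \sum_(k < K.+1) (q * C%:R * P k - q * (w k * P k) + (1 - q) * (w (K - k)%N * P k)).
    apply: eq_bigr => k _; have hk : (k <= K)%N by rewrite -ltnS.
    rewrite hPk (mean_false hs hsym) // /w; ring.
  by rewrite big_split sumrB /= -!mulr_sumr.
set E := \sum_(k < K.+1) w k * ((1 - p) * P (K - k)%N - p * P k).
have L2 : E = (1 - p) * X2 - p * X1.
  have -> : E = \sum_(k < K.+1) ((1 - p) * (w k * P (K - k)%N) - p * (w k * P k)).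
    by apply: eq_bigr => k _; ring.
  by rewrite sumrB -!mulr_sumr HX2.
have L3 : X1 + X2 <= C%:R.
  rewrite /X1 /X2 -big_split /=.
  apply: (@le_trans _ _ (\sum_(k < K.+1) C%:R * P k)); last by rewrite -mulr_sumr SP mulr1.
  apply: ler_sum => k _; have hk : (k <= K)%N by rewrite -ltnS.
  have hk' : (K - k <= K)%N by apply: leq_subr.
  rewrite -mulrDl; apply: ler_wpM2r; first exact: hP0.
  case: (leqP K (2 * k)) => h2.
    by rewrite hwz // add0r; apply: hwC.
  rewrite (hwz (K - k)%N) // ?addr0; first exact: hwC.
  lia.
set e0 := (1 - p) * P K - p * P 0%N.
have he0 : 0 < e0 by apply: e0_pos => //; lia.
have L4 : C%:R * e0 <= E.
  rewrite /E big_ord_recl /=. rewrite subn0 hw00 -/e0.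
  rewrite -{1}(addr0 (C%:R * e0)). apply: lerD => //.
  apply: sumr_ge0 => i _; rewrite /bump leq0n add1n.
  have hk : (i.+1 <= K)%N by apply: ltn_ord.
  case: (leqP K (2 * i.+1)) => h2; first by rewrite hwz // mul0r.
  apply: mulr_ge0; first exact: hw0.
  by apply: e_nonneg => //; lra.
have hC1 : (1 <= C%:R :> R) by rewrite ler1n.
have hxC : C%:R * x <= C%:R * p by apply: ler_wpM2l => //; lra.
have hCe : 0 < C%:R * e0 by apply: mulr_gt0 => //; lra.
have hqp : (q - p) * (X1 + X2) <= (q - p) * C%:R by apply: ler_wpM2l => //; lra.
have hfix' : q + A = x * (1 + C%:R).
  by rewrite -hfix mulfVK //; apply: lt0r_neq0 => //; lra.
move: hfix'; rewrite SP mulr1 in L1; rewrite L1 => hfix'.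
have key : q + (q * C%:R - q * X1 + (1 - q) * X2) =
  q + q * C%:R - (q - p) * (X1 + X2) + ((1 - p) * X2 - p * X1) by ring.
rewrite key -L2 in hfix'.
have k2 : x * (1 + C%:R) = x + C%:R * x by ring.
have k3 : q * C%:R - (q - p) * C%:R = C%:R * p by ring.
rewrite k2 in hfix'.
lra.
Qed.
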